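(* Let $(\Omega,d)$ be a compact Hadamard space, let $n\ge1$, and fix $Y_1,\dots,Y_n\in\Omega$. Let $\Delta^{n-1}=\{w\in\mathbb{R}^n: w_i\ge0,\ \sum_i w_i=1\}$ and, for $w\in\Delta^{n-1}$, let $\mu(w)=\operatorname{argmin}_{y\in\Omega}\sum_{i=1}^n w_i d^2(y,Y_i)$ be the weighted Fréchet mean (which exists and is unique in a Hadamard space). Let $D=\sup_{u,v\in\Omega}d(u,v)$. Then for all $w_1,w_2\in\Delta^{n-1}$, \[d(\mu(w_1),\mu(w_2))\le D\sqrt{n}\,\|w_1-w_2\|_2.\]
   Context: A metric space $(\Omega,d)$ is a Hadamard space if it is complete and for every $\omega_1,\omega_2\in\Omega$ there exists $\alpha\in\Omega$ such that $d^2(\beta,\alpha)\le \tfrac12 d^2(\beta,\omega_1)+\tfrac12 d^2(\beta,\omega_2)-\tfrac14 d^2(\omega_1,\omega_2)$ for all $\beta\in\Omega$. $\|\cdot\|_2$ is the Euclidean norm on $\mathbb{R}^n$. *)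

(* Defs.v *)
From Stdlib Require Import Reals List.
Open Scope R_scope.

Fixpoint sumR (n : nat) (f : nat -> R) : R :=
  match n with
  | O => 0
  | S m => sumR m f + f m
  end.

Section Metric.
Variable (T : Type) (d : T -> T -> R).

Definition is_metric : Prop :=
  (forall x y, 0 <= d x y) /\
  (forall x y, d x y = 0 <-> x = y) /\
  (forall x y, d x y = d y x) /\
  (forall x y z, d x z <= d x y + d y z).

Definition cauchy_seq (u : nat -> T) : Prop :=
  forall eps, 0 < eps -> exists N, forall p q, (N <= p)%nat -> (N <= q)%nat ->
    d (u p) (u q) < eps.

Definition converges_to (u : nat -> T) (l : T) : Prop :=
  forall eps, 0 < eps -> exists N, forall p, (N <= p)%nat -> d (u p) l < eps.

Definition complete : Prop :=
  forall u, cauchy_seq u -> exists l, converges_to u l.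

Definition hadamard : Prop :=
  is_metric /\ complete /\
  forall w1 w2 : T, exists a : T, forall b : T,
    (d b a)^2 <= /2 * (d b w1)^2 + /2 * (d b w2)^2 - /4 * (d w1 w2)^2.

Definition open_set (U : T -> Prop) : Prop :=
  forall x, U x -> exists e, 0 < e /\ forall y, d x y < e -> U y.

Definition compact_space : Prop :=
  forall (I : Type) (U : I -> T -> Prop),
    (forall i, open_set (U i)) -> (forall x, exists i, U i x) ->
    exists l : list I, forall x, exists i, In i l /\ U i x.

Definition frechet_fun (n : nat) (Y : nat -> T) (w : nat -> R) (y : T) : R :=
  sumR n (fun i => w i * (d y (Y i))^2).

Definition is_frechet_mean (n : nat) (Y : nat -> T) (w : nat -> R) (m : T) : Prop :=
  forall y, frechet_fun n Y w m <= frechet_fun n Y w y.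

Definition is_diameter (D : R) : Prop :=
  is_lub (fun r => exists u v, r = d u v) D.

End Metric.

(* probability simplex Delta^{n-1}, vectors indexed by 0..n-1 *)
Definition in_simplex (n : nat) (w : nat -> R) : Prop :=
  (forall i, (i < n)%nat -> 0 <= w i) /\ sumR n w = 1.

Definition dist2 (n : nat) (w1 w2 : nat -> R) : R :=
  sqrt (sumR n (fun i => (w1 i - w2 i)^2)).

(* Main.v *)
Require Import Defs.
From Stdlib Require Import Reals.
From Stdlib Require Import Lra Lia Psatz ZArith.
Open Scope R_scope.

Lemma sumR_S n f : sumR (S n) f = sumR n f + f n.
Proof. reflexivity. Qed.

Lemma sumR_le n f g : (forall i, (i < n)%nat -> f i <= g i) -> sumR n f <= sumR n g.
Proof.
  induction n; simpl; intros H; [lra|].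
  assert (f n <= g n) by (apply H; lia).
  assert (sumR n f <= sumR n g) by (apply IHn; intros; apply H; lia). lra.
Qed.

Lemma sumR_ge0 n f : (forall i, (i < n)%nat -> 0 <= f i) -> 0 <= sumR n f.
Proof.
  intros H. replace 0 with (sumR n (fun _ => 0)).
  - apply sumR_le; auto.
  - induction n; simpl; auto. rewrite IHn; [lra|intros; apply H; lia].
Qed.

Lemma sumR_lin n (w A B : nat -> R) (a b c : R) :
  sumR n (fun i => w i * (a * A i + b * B i + c)) =
  a * sumR n (fun i => w i * A i) + b * sumR n (fun i => w i * B i) + c * sumR n w.
Proof. induction n; simpl; [ring|]. rewrite IHn. ring. Qed.

Lemma sumR_diff n (w1 w2 A B : nat -> R) :
  (sumR n (fun i => w1 i * A i) - sumR n (fun i => w1 i * B i))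
  + (sumR n (fun i => w2 i * B i) - sumR n (fun i => w2 i * A i))
  = sumR n (fun i => (w1 i - w2 i) * (A i - B i)).
Proof. induction n; simpl; [ring|]. rewrite <- IHn. ring. Qed.

Lemma cs_aux n (a : nat -> R) x :
  2 * x * sumR n a <= sumR n (fun i => a i ^ 2) + INR n * x ^ 2.
Proof.
  induction n; [simpl; lra|]. rewrite !sumR_S, S_INR.
  pose proof (Rle_0_sqr (a n - x)). unfold Rsqr in *. lra.
Qed.

Lemma cs n (a : nat -> R) : (sumR n a) ^ 2 <= INR n * sumR n (fun i => a i ^ 2).
Proof.
  induction n; [simpl; lra|]. rewrite !sumR_S, S_INR.
  pose proof (cs_aux n a (a n)). lra.
Qed.

Lemma pow2_ge K : INR K + 1 <= 2 ^ K.
Proof.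
  induction K; [simpl; lra|]. rewrite S_INR. change (2 ^ S K) with (2 * 2 ^ K).
  pose proof (pos_INR K). lra.
Qed.

Section SC.
Variables (T : Type) (d : T -> T -> R) (Hhad : hadamard T d)
  (n : nat) (Y : nat -> T) (w : nat -> R) (Hw : in_simplex n w) (m : T)
  (Hm : is_frechet_mean T d n Y w m).

Lemma sc_step K : forall y,
  frechet_fun T d n Y w y - frechet_fun T d n Y w m >= (1 - / 2 ^ K) * d m y ^ 2.
Proof.
  destruct Hhad as [[Hpos [Hz [Hsym Htri]]] [_ Hmid]].
  destruct Hw as [Hw0 Hw1].
  induction K; intros y.
  - simpl. rewrite Rinv_1. specialize (Hm y). nra.
  - destruct (Hmid m y) as [a Ha].
    assert (HFa : frechet_fun T d n Y w a <=
      /2 * frechet_fun T d n Y w m + /2 * frechet_fun T d n Y w y - /4 * d m y ^ 2).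
    { unfold frechet_fun.
      eapply Rle_trans.
      - apply sumR_le with (g := fun i => w i * (/2 * d m (Y i) ^2 + /2 * d y (Y i) ^2 + (- /4 * d m y ^2))).
        intros i Hi. apply Rmult_le_compat_l; [apply Hw0; auto|].
        specialize (Ha (Y i)). rewrite (Hsym a), (Hsym m), (Hsym y). lra.
      - rewrite sumR_lin, Hw1. lra. }
    specialize (IHK a).
    assert (Hya : d y a ^ 2 <= /4 * d m y ^ 2).
    { specialize (Ha y). assert (d y y = 0) by (apply Hz; auto).
      rewrite (Hsym y m) in Ha. rewrite H in Ha. lra. }
    assert (Hya' : d y a <= /2 * d m y).
    { pose proof (Hpos y a). pose proof (Hpos m y). nra. }
    assert (Hma : /2 * d m y <= d m a).
    { pose proof (Htri m a y). rewrite (Hsym a y) in H. lra. }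
    assert (Hma2 : /4 * d m y ^ 2 <= d m a ^ 2).
    { pose proof (Hpos m y). nra. }
    assert (Ht : 0 < / 2 ^ K <= 1).
    { pose proof (pow2_ge K). pose proof (pos_INR K). split.
      - apply Rinv_0_lt_compat; lra.
      - rewrite <- Rinv_1. apply Rinv_le_contravar; lra. }
    replace (/ 2 ^ S K) with (/2 * / 2 ^ K) by (simpl; rewrite Rinv_mult; ring).
    nra.
Qed.

Lemma sc : forall y,
  frechet_fun T d n Y w y - frechet_fun T d n Y w m >= d m y ^ 2.
Proof.
  intros y. set (g := frechet_fun T d n Y w y - frechet_fun T d n Y w m).
  set (c := d m y ^ 2).
  destruct (Rge_dec g c) as [|Hlt]; auto. exfalso.
  assert (Hgc : g < c) by lra.
  assert (Hg0 : 0 <= g) by (unfold g; specialize (Hm y); lra).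
  destruct (archimed (c / (c - g))) as [Hup _].
  assert (Hpos : (0 <= up (c / (c - g)))%Z).
  { assert (0 < c / (c - g)) by (apply Rdiv_lt_0_compat; lra).
    apply le_IZR. lra. }
  set (K := Z.to_nat (up (c / (c - g)))).
  assert (HK : INR K = IZR (up (c / (c - g)))) by (unfold K; rewrite INR_IZR_INZ, Z2Nat.id; auto).
  rewrite <- HK in Hup.
  pose proof (sc_step K y) as HK'. fold g c in HK'.
  pose proof (pow2_ge K).
  assert (0 < 2 ^ K) by (pose proof (pos_INR K); lra).
  assert (c - g <= c * / 2 ^ K) by lra.
  assert (2 ^ K * (c - g) <= c).
  { apply Rmult_le_compat_l with (r := 2 ^ K) in H1; [|lra].
    rewrite <- Rmult_assoc, (Rmult_comm (2^K) c), Rmult_assoc, Rinv_r in H1; lra. }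
  assert (c / (c - g) * (c - g) = c) by (field; lra).
  nra.
Qed.
End SC.

Theorem lemma4p3 (T : Type) (d : T -> T -> R)
  (Hhad : hadamard T d) (Hcpt : compact_space T d)
  (n : nat) (Hn : (1 <= n)%nat) (Y : nat -> T)
  (D : R) (HD : is_diameter T d D)
  (w1 w2 : nat -> R) (Hw1 : in_simplex n w1) (Hw2 : in_simplex n w2)
  (m1 m2 : T) (Hm1 : is_frechet_mean T d n Y w1 m1)
  (Hm2 : is_frechet_mean T d n Y w2 m2) :
  d m1 m2 <= D * sqrt (INR n) * dist2 n w1 w2.
Proof.
  pose proof (sc T d Hhad n Y w1 Hw1 m1 Hm1 m2) as S1.
  pose proof (sc T d Hhad n Y w2 Hw2 m2 Hm2 m1) as S2.
  pose proof Hhad as [[Hpos [Hz [Hsym Htri]]] _].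
  rewrite (Hsym m2 m1) in S2.
  unfold frechet_fun in S1, S2.
  pose proof (sumR_diff n w1 w2 (fun i => d m2 (Y i) ^ 2) (fun i => d m1 (Y i) ^ 2)) as E.
  cbv beta in E.
  set (e := d m1 m2) in *.
  assert (HDb : forall u v, d u v <= D).
  { intros u v. destruct HD as [Hub _]. apply Hub. eauto. }
  set (S := sumR n (fun i => Rabs (w1 i - w2 i))).
  assert (Hbound : sumR n (fun i => (w1 i - w2 i) * (d m2 (Y i) ^ 2 - d m1 (Y i) ^ 2))
                   <= sumR n (fun i => Rabs (w1 i - w2 i) * (2 * D * e))).
  { apply sumR_le. intros i _.
    set (a := w1 i - w2 i).
    assert (H1 : Rabs (d m2 (Y i) - d m1 (Y i)) <= e).
    { apply Rabs_le. pose proof (Htri m1 m2 (Y i)). pose proof (Htri m2 m1 (Y i)).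
      rewrite (Hsym m2 m1) in H0. fold e in H, H0. lra. }
    pose proof (Hpos m1 (Y i)). pose proof (Hpos m2 (Y i)).
    pose proof (HDb m1 (Y i)). pose proof (HDb m2 (Y i)).
    replace (d m2 (Y i) ^ 2 - d m1 (Y i) ^ 2)
      with ((d m2 (Y i) - d m1 (Y i)) * (d m2 (Y i) + d m1 (Y i))) by ring.
    eapply Rle_trans; [apply Rle_abs|].
    rewrite !Rabs_mult. apply Rmult_le_compat_l; [apply Rabs_pos|].
    rewrite (Rabs_right (d m2 (Y i) + d m1 (Y i))) by lra.
    pose proof (Rabs_pos (d m2 (Y i) - d m1 (Y i))). nra. }
  assert (HS : sumR n (fun i => Rabs (w1 i - w2 i) * (2 * D * e)) = S * (2 * D * e)).
  { unfold S. clear. induction n; simpl; [ring|]. rewrite IHn. ring. }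
  assert (He0 : 0 <= e) by apply Hpos.
  assert (HD0 : 0 <= D) by (pose proof (Hpos m1 m1); pose proof (HDb m1 m1); lra).
  assert (HS0 : 0 <= S) by (apply sumR_ge0; intros; apply Rabs_pos).
  assert (Hmain : e * e <= D * e * S) by (replace (e * e) with (e ^ 2) by ring; lra).
  assert (HSle : S <= sqrt (INR n) * dist2 n w1 w2).
  { unfold dist2. rewrite <- sqrt_mult.
    2: apply pos_INR.
    2: apply sumR_ge0; intros; apply pow2_ge_0.
    rewrite <- (sqrt_pow2 S HS0). apply sqrt_le_1_alt.
    pose proof (cs n (fun i => Rabs (w1 i - w2 i))). fold S in H.
    eapply Rle_trans; [exact H|]. right. f_equal.
    clear. induction n; [reflexivity|]. rewrite !sumR_S, IHn. f_equal.
    unfold pow. rewrite !Rmult_1_r, <- Rabs_mult. apply Rabs_right, Rle_ge, Rle_0_sqr. }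
  assert (e <= D * S).
  { destruct (Req_dec e 0) as [He|Hne].
    - rewrite He. apply Rmult_le_pos; lra.
    - apply Rmult_le_reg_l with e; [lra|]. lra. }
  assert (0 <= sqrt (INR n) * dist2 n w1 w2).
  { apply Rmult_le_pos; [apply sqrt_pos|unfold dist2; apply sqrt_pos]. }
  rewrite Rmult_assoc. eapply Rle_trans; [eassumption|]. apply Rmult_le_compat_l; lra.
Qed.
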